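(* Let $G$ be a graph. (i) Every self-locating-dominating code in $G$ is a $2$-dominating set of $G$. (ii) If the girth of $G$ is at least $5$, then every $2$-dominating set of $G$ is a self-locating-dominating code of $G$.
   Context: All graphs are finite, simple and undirected (not necessarily connected). For $u\in V$, $N(u)$ is the set of neighbours of $u$ and $N[u]=N(u)\cup\{u\}$. A code is a non-empty subset $C\subseteq V$; $I(C;u)=N[u]\cap C$. A code $C$ is self-locating-dominating if for every $u\in V\setminus C$ we have $I(C;u)\neq\emptyset$ and $\bigcap_{c\in I(C;u)}N[c]=\{u\}$. A set $S\subseteq V$ is $2$-dominating if $|N[u]\cap S|\ge 2$ for every $u\in V\setminus S$. The girth is the length of a shortest cycle; acyclic graphs have infinite girth. *)

(* Defs.v *)
From mathcomp Require Import all_boot.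
Set Implicit Arguments. Unset Strict Implicit. Unset Printing Implicit Defensive.

Definition simple_graph (T : finType) (e : rel T) : Prop :=
  symmetric e /\ irreflexive e.

Definition nbhd (T : finType) (e : rel T) (u : T) : {set T} := [set v | e u v].
Definition cnbhd (T : finType) (e : rel T) (u : T) : {set T} := u |: nbhd e u.

Definition Iset (T : finType) (e : rel T) (C : {set T}) (u : T) : {set T} :=
  cnbhd e u :&: C.

Definition bigcap_cnbhd (T : finType) (e : rel T) (S : {set T}) : {set T} :=
  [set v | [forall c in S, v \in cnbhd e c]].

Definition is_code (T : finType) (C : {set T}) : Prop := C != set0.

Definition self_locating_dominating (T : finType) (e : rel T) (C : {set T}) : Prop :=
  is_code C /\
  forall u, u \notin C ->
    Iset e C u != set0 /\ bigcap_cnbhd e (Iset e C u) = [set u].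

Definition two_dominating (T : finType) (e : rel T) (S : {set T}) : Prop :=
  forall u, u \notin S -> 2 <= #|cnbhd e u :&: S|.

Definition is_graph_cycle (T : finType) (e : rel T) (s : seq T) : Prop :=
  3 <= size s /\ uniq s /\ cycle e s.

(* girth >= g : every cycle has length at least g (acyclic: infinite girth) *)
Definition girth_ge (T : finType) (e : rel T) (g : nat) : Prop :=
  forall s : seq T, is_graph_cycle e s -> g <= size s.

(* Main.v *)
Require Import Defs.
From mathcomp Require Import all_boot.

Lemma in_cnbhd (T : finType) (e : rel T) u v : (v \in cnbhd e u) = (v == u) || e u v.
Proof. by rewrite /cnbhd /nbhd !inE. Qed.

Theorem mainTheorem10 (T : finType) (e : rel T) (He : simple_graph e) :
  (forall C : {set T}, self_locating_dominating e C -> two_dominating e C) /\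
  (girth_ge e 5 ->
   forall S : {set T}, S != set0 -> two_dominating e S ->
     self_locating_dominating e S).
Proof.
case: He => esym eirr.
split.
- move=> C [_ HC] u uC.
  have [/set0Pn [c cI] Hcap] := HC u uC.
  rewrite leqNgt; apply/negP => H1.
  have : #|Iset e C u| == 1.
    rewrite eqn_leq -ltnS H1 /=. by apply/card_gt0P; exists c.
  move/cards1P => [c' Hc'].
  have : c' \in bigcap_cnbhd e (Iset e C u).
    rewrite inE; apply/forall_inP => x; rewrite Hc' inE => /eqP ->.
    by rewrite in_cnbhd eqxx.
  rewrite Hcap inE => /eqP Hcu.
  have : c' \in Iset e C u by rewrite Hc' inE.
  by rewrite /Iset inE Hcu (negbTE uC) andbF.
- move=> Hg S S0 H2. split => // u uS.
  have H := H2 u uS.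
  have [c1 [c2 [h1 h2 h12]]] := card_gt1P H.
  split.
    by apply/set0Pn; exists c1.
  have adj : forall c, c \in Iset e S u -> c != u /\ e u c /\ c \in S.
    move=> c; rewrite /Iset inE in_cnbhd => /andP [/orP [/eqP -> | ecu] cS].
      by rewrite cS in uS.
    split; last by [].
    by apply/eqP => E; rewrite E eirr in ecu.
  have [n1 [e1 s1]] := adj _ h1.
  have [n2 [e2 s2]] := adj _ h2.
  apply/setP => v; rewrite /bigcap_cnbhd inE; apply/idP/idP.
  + move/forall_inP => Hv.
    have v1 := Hv _ h1; have v2 := Hv _ h2.
    rewrite in_cnbhd in v1; rewrite in_cnbhd in v2.
    case: (eqVneq v u) => [-> | vu]; first by rewrite inE.
    exfalso.
    case/orP: v1 => [/eqP vc1 | ev1].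
      subst v. case/orP: v2 => [/eqP E | ec21]; first by rewrite E eqxx in h12.
      have := Hg [:: u; c1; c2].
      rewrite /is_graph_cycle /= !inE !negb_or (eq_sym u c1) (eq_sym u c2)
        n1 n2 h12 e1 (esym c1 c2) ec21 (esym c2 u) e2 /=.
      by move=> /(_ (conj erefl (conj erefl erefl))).
    case/orP: v2 => [/eqP vc2 | ev2].
      subst v.
      have := Hg [:: u; c1; c2].
      rewrite /is_graph_cycle /= !inE !negb_or (eq_sym u c1) (eq_sym u c2)
        n1 n2 h12 e1 ev1 (esym c2 u) e2 /=.
      by move=> /(_ (conj erefl (conj erefl erefl))).
    have vc1 : v != c1 by apply/eqP => E; rewrite E eirr in ev1.
    have vc2 : v != c2 by apply/eqP => E; rewrite E eirr in ev2.
    have := Hg [:: u; c1; v; c2].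
    rewrite /is_graph_cycle /= !inE !negb_or (eq_sym u c1) (eq_sym u c2)
      (eq_sym u v) (eq_sym c1 v) (eq_sym v c2) n1 n2 vu vc1 h12
      (eq_sym c2 v) vc2 e1 ev1 (esym v c2) ev2 (esym c2 u) e2 /=.
    by move=> /(_ (conj erefl (conj erefl erefl))).
  + rewrite inE => /eqP ->; apply/forall_inP => c hc.
    have [_ [ec _]] := adj _ hc.
    by rewrite in_cnbhd esym ec orbT.
Qed.
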